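(* Let $\|\cdot\|$ be a strictly convex norm on $\mathbb{R}^n$ that is continuously differentiable on $\mathbb{R}^n\setminus\{0\}$. If $\|\cdot\|$ is doubling in the tangent plane, then $\|\cdot\|$ is doubling. Moreover, if $\|\cdot\|$ is doubling in the tangent plane and also geometrically convex in the tangent plane, then $\|\cdot\|$ is geometrically convex. Further, if $\|\cdot\|$ is doubling in the tangent plane and also balanced in the tangent plane, then it is balanced.
   Context: $N(x)$ denotes the gradient of $\|\cdot\|$ at $x\neq0$, $\langle\cdot,\cdot\rangle$ the Euclidean inner product, and $h(x,y)=\|y\|-\langle y,N(x)\rangle$ for $x\ne0$. Strict convexity: if $x,y\ne0$ and $\|x+y\|=\|x\|+\|y\|$ then $y=\alpha x$ for some $\alpha>0$. Definitions (each ''is P'' means ''is P with some constants''): - doubling (constants $T,r>0$): $h(x,x+2y)\le Th(x,x+y)$ for all $x\ne0$, $\|y\|\le r\|x\|$; - doubling in the tangent plane (constants $T,r>0$): the same inequality for all $x\neq0$, $\|y\|\le r\|x\|$ with $\langle y,N(x)\rangle=0$; - geometrically convex (constants $r>0$, $\Lambda>2$): $\Lambda h(x,x+y)\le h(x,x+2y)$ for all $x\ne0$, $\|y\|\le r\|x\|$; - geometrically convex in the tangent plane (constants $\Lambda>2$, $r>0$): $h(x,x+2y)\ge\Lambda h(x,x+y)$ for all $x\ne0$, $\|y\|\le r\|x\|$ with $\langle y,N(x)\rangle=0$; - balanced (constants $R>0$, $K\ge1$): $h(x,x+y)\le Kh(x,x-y)$ for all $x\neq0$, $\|y\|\le R\|x\|$;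 - balanced in the tangent plane (constants $r,K>0$): $h(x,x+y)\le Kh(x,x-y)$ for all $x\ne0$, $\|y\|\le r\|x\|$ with $\langle y,N(x)\rangle=0$. *)

(* Defs.v *)
From HB Require Import structures.
From mathcomp Require Import all_boot all_order all_algebra.
From mathcomp Require Import all_classical all_reals all_analysis.
Set Implicit Arguments. Unset Strict Implicit. Unset Printing Implicit Defensive.
Import Order.TTheory GRing.Theory Num.Theory.
Import numFieldNormedType.Exports.
Local Open Scope ring_scope.

Section Defs.
Variables (R : realType) (n : nat).
Implicit Types (x y : 'rV[R]_n).

Definition dotp x y : R := \sum_(i < n) x ord0 i * y ord0 i.

Definition is_norm (nrm : 'rV[R]_n -> R) : Prop :=
  [/\ forall x, 0 <= nrm x,
      forall x, nrm x = 0 -> x = 0,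
      forall (a : R) x, nrm (a *: x) = `|a| * nrm x
    & forall x y, nrm (x + y) <= nrm x + nrm y].

Definition strictly_convex (nrm : 'rV[R]_n -> R) : Prop :=
  forall x y, x != 0 -> y != 0 -> nrm (x + y) = nrm x + nrm y ->
    exists2 a : R, 0 < a & y = a *: x.

Definition is_gradient (nrm : 'rV[R]_n -> R) (N : 'rV[R]_n -> 'rV[R]_n) : Prop :=
  forall x, x != 0 -> differentiable nrm x /\ forall y, 'd nrm x y = dotp y (N x).

Definition C1_away_from_0 (nrm : 'rV[R]_n -> R) (N : 'rV[R]_n -> 'rV[R]_n) : Prop :=
  is_gradient nrm N /\ forall x, x != 0 -> {for x, continuous N}.

Definition hfun (nrm : 'rV[R]_n -> R) (N : 'rV[R]_n -> 'rV[R]_n) x y : R :=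
  nrm y - dotp y (N x).

Variables (nrm : 'rV[R]_n -> R) (N : 'rV[R]_n -> 'rV[R]_n).
Local Notation h := (hfun nrm N).

Definition doubling : Prop :=
  exists T r : R, [/\ 0 < T, 0 < r &
    forall x y, x != 0 -> nrm y <= r * nrm x -> h x (x + 2 *: y) <= T * h x (x + y)].

Definition doubling_tangent : Prop :=
  exists T r : R, [/\ 0 < T, 0 < r &
    forall x y, x != 0 -> nrm y <= r * nrm x -> dotp y (N x) = 0 ->
      h x (x + 2 *: y) <= T * h x (x + y)].

Definition geom_convex : Prop :=
  exists r L : R, [/\ 0 < r, 2 < L &
    forall x y, x != 0 -> nrm y <= r * nrm x -> L * h x (x + y) <= h x (x + 2 *: y)].

Definition geom_convex_tangent : Prop :=
  exists L r : R, [/\ 2 < L, 0 < r &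
    forall x y, x != 0 -> nrm y <= r * nrm x -> dotp y (N x) = 0 ->
      L * h x (x + y) <= h x (x + 2 *: y)].

Definition balanced : Prop :=
  exists Rc K : R, [/\ 0 < Rc, 1 <= K &
    forall x y, x != 0 -> nrm y <= Rc * nrm x -> h x (x + y) <= K * h x (x - y)].

Definition balanced_tangent : Prop :=
  exists r K : R, [/\ 0 < r, 0 < K &
    forall x y, x != 0 -> nrm y <= r * nrm x -> dotp y (N x) = 0 ->
      h x (x + y) <= K * h x (x - y)].

End Defs.

(* Main.v *)
Require Import Defs.
From HB Require Import structures.
From mathcomp Require Import all_boot all_order all_algebra all_classical all_reals all_analysis.
From mathcomp Require Import lra ring.
Import Order.TTheory GRing.Theory Num.Theory numFieldNormedType.Exports.
Local Open Scope ring_scope.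
Set Implicit Arguments. Unset Strict Implicit.

Lemma dotN_le (R : realType) (n : nat) (nrm : 'rV[R]_n -> R) (N : 'rV[R]_n -> 'rV[R]_n) x z :
  is_norm nrm -> is_gradient nrm N -> x != 0 -> dotp z (N x) <= nrm z.
Proof.
move=> [n0 n1 nZ nD] hg xn0; have [dif dE] := hg x xn0.
rewrite -dE -deriveE //.
rewrite /derive; apply: limr_le; first exact: diff_derivable.
near=> h.
have hn0 : h != 0 by near: h; exact: nbhs_dnbhs_neq.
rewrite /=.
change (h^-1 * (nrm (h *: z + x) - nrm x) <= nrm z).
have e1 := nD (h *: z) x; rewrite nZ in e1.
have e2 := nD (h *: z + x) ((- h) *: z).
rewrite nZ normrN scaleNr addrC addKr in e2.
have [hp|hn] := ltP 0 h.
  rewrite (ger0_norm (ltW hp)) in e1 e2.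
  rewrite ler_pdivrMl //; lra.
have hlt : h < 0 by rewrite lt_neqAle hn hn0.
rewrite (ler0_norm (ltW hlt)) !mulNr in e1 e2.
rewrite -(@ler_nM2l _ h) // mulrA mulrV ?unitfE // mul1r.
by rewrite lerBrDr addrC -lerBrDr.
Unshelve. all: by end_near.
Qed.

Lemma dotN_eq (R : realType) (n : nat) (nrm : 'rV[R]_n -> R) (N : 'rV[R]_n -> 'rV[R]_n) x :
  is_norm nrm -> is_gradient nrm N -> x != 0 -> dotp x (N x) = nrm x.
Proof.
move=> hn hg xn0; apply/le_anti; rewrite dotN_le //=.
move: hn => [n0 n1 nZ nD]; have [dif dE] := hg x xn0.
rewrite -dE -deriveE //.
rewrite /derive; apply: limr_ge; first exact: diff_derivable.
near=> h.
have hn0 : h != 0 by near: h; exact: nbhs_dnbhs_neq.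
have h1 : `|h| < 1.
  near: h; apply: nbhs_dnbhs; exact: (@nbhs0_lt R R 1 ltr01).
rewrite /=.
change (nrm x <= h^-1 * (nrm (h *: x + x) - nrm x)).
have -> : h *: x + x = (h + 1) *: x by rewrite scalerDl scale1r.
rewrite nZ ger0_norm; last by move: h1; rewrite ltr_norml; lra.
by rewrite mulrDl mul1r addrK mulrA mulVf // mul1r.
Unshelve. all: by end_near.
Qed.


Lemma dotpDl (R : realType) (n : nat) (u v w : 'rV[R]_n) :
  dotp (u + v) w = dotp u w + dotp v w.
Proof. by rewrite /dotp -big_split; apply: eq_bigr => i _; rewrite mxE mulrDl. Qed.

Lemma dotpZl (R : realType) (n : nat) (a : R) (u w : 'rV[R]_n) :
  dotp (a *: u) w = a * dotp u w.
Proof. by rewrite /dotp mulr_sumr; apply: eq_bigr => i _; rewrite mxE mulrA. Qed.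

Lemma dotpNl (R : realType) (n : nat) (u w : 'rV[R]_n) :
  dotp (- u) w = - dotp u w.
Proof. by rewrite -scaleN1r dotpZl mulN1r. Qed.

Lemma h_ge0 (R : realType) (n : nat) (nrm : 'rV[R]_n -> R) (N : 'rV[R]_n -> 'rV[R]_n) x z :
  is_norm nrm -> is_gradient nrm N -> x != 0 -> 0 <= hfun nrm N x z.
Proof. by move=> hn hg xn0; rewrite /hfun subr_ge0 (dotN_le z hn hg xn0). Qed.

Lemma h_xx (R : realType) (n : nat) (nrm : 'rV[R]_n -> R) (N : 'rV[R]_n -> 'rV[R]_n) x :
  is_norm nrm -> is_gradient nrm N -> x != 0 -> hfun nrm N x x = 0.
Proof. by move=> hn hg xn0; rewrite /hfun (dotN_eq hn hg xn0) subrr. Qed.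

Lemma h_Z (R : realType) (n : nat) (nrm : 'rV[R]_n -> R) (N : 'rV[R]_n -> 'rV[R]_n) x c z :
  is_norm nrm -> 0 <= c -> hfun nrm N x (c *: z) = c * hfun nrm N x z.
Proof.
move=> [n0 n1 nZ nD] c0; rewrite /hfun nZ dotpZl ger0_norm //.
by rewrite mulrBr.
Qed.

Lemma h_D (R : realType) (n : nat) (nrm : 'rV[R]_n -> R) (N : 'rV[R]_n -> 'rV[R]_n) x z1 z2 :
  is_norm nrm -> hfun nrm N x (z1 + z2) <= hfun nrm N x z1 + hfun nrm N x z2.
Proof.
move=> [n0 n1 nZ nD]; rewrite /hfun dotpDl.
have := nD z1 z2; lra.
Qed.

Lemma h_conv3 (R : realType) (n : nat) (nrm : 'rV[R]_n -> R) (N : 'rV[R]_n -> 'rV[R]_n) x w p q u :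
  is_norm nrm -> p <= q -> q <= u ->
  (u - p) * hfun nrm N x (x + q *: w) <=
  (u - q) * hfun nrm N x (x + p *: w) + (q - p) * hfun nrm N x (x + u *: w).
Proof.
move=> hn pq qu.
have e : (u - p) *: (x + q *: w) = (u - q) *: (x + p *: w) + (q - p) *: (x + u *: w).
  rewrite !scalerDr !scalerA addrACA -!scalerDl; congr (_ *: _ + _ *: _); ring.
have c1 : 0 <= u - p by lra.
have c2 : 0 <= u - q by lra.
have c3 : 0 <= q - p by lra.
rewrite -(h_Z N x (x + q*:w) hn c1) -(h_Z N x (x + p*:w) hn c2).
rewrite -(h_Z N x (x + u*:w) hn c3) e.
exact: h_D.
Qed.

Definition convP (R : realType) (f : R -> R) :=
  [/\ forall p q u, p <= q -> q <= u -> (u - p) * f q <= (u - q) * f p + (q - p) * f u,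
      f 0 = 0 & forall t, 0 <= f t].

Lemma mono_pos (R : realType) (f : R -> R) p q : convP f -> 0 <= p -> p <= q -> f p <= f q.
Proof.
move=> [Hc H0 Hn] p0 pq.
have [q0|qp] := eqVneq q 0.
  have p0' : p = 0 by apply/le_anti; rewrite p0 -q0 pq.
  by rewrite p0' q0.
have qpos : 0 < q by rewrite lt_neqAle eq_sym qp (le_trans p0 pq).
have := Hc 0 p q p0 pq; rewrite H0 mulr0 add0r !subr0 => h.
have := Hn q; have := Hn p; nra.
Qed.

Lemma mono_neg (R : realType) (f : R -> R) p q : convP f -> 0 <= p -> p <= q -> f (- p) <= f (- q).
Proof.
move=> [Hc H0 Hn] p0 pq.
have [q0|qp] := eqVneq q 0.
  have p0' : p = 0 by apply/le_anti; rewrite p0 -q0 pq.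
  by rewrite p0' q0.
have qpos : 0 < q by rewrite lt_neqAle eq_sym qp (le_trans p0 pq).
have h1 : - q <= - p by lra.
have h2 : - p <= 0 by lra.
have := Hc (-q) (-p) 0 h1 h2; rewrite H0 mulr0 addr0 !sub0r !opprK => h.
have := Hn (-q); have := Hn (-p); nra.
Qed.

Lemma dbl_real (R : realType) (f : R -> R) T s : convP f -> 0 < T ->
  (forall t, `|t| <= 3 -> f (2 * t) <= T * f t) -> - (1/4) <= s -> s <= 1/4 ->
  (1 + 2 * s) * f (2 / (1 + 2 * s)) <= (2 * T ^+ 2) * ((1 + s) * f (1 / (1 + s))).
Proof.
move=> hf T0 HD s1 s2; have [Hc H0 Hn] := hf.
have c0 : 0 < 1 + s by lra.
have d0 : 0 < 1 + 2 * s by lra.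
set a := 1 / (1 + s).
have a0 : 0 <= a by rewrite /a divr_ge0 // ltW.
have a1 : a <= 4/3 by rewrite /a ler_pdivrMr // ; lra.
have hb : 2 / (1 + 2 * s) <= 4 * a.
  rewrite /a mulrA ler_pdivrMr // mulrAC ler_pdivlMr //; lra.
have b0 : 0 <= 2 / (1 + 2 * s) by rewrite divr_ge0 // ltW.
have m1 := mono_pos hf b0 hb.
have e1 : f (4 * a) <= T * f (2 * a).
  have -> : 4 * a = 2 * (2 * a) by ring.
  apply: HD; rewrite ger0_norm; lra.
have e2 : f (2 * a) <= T * f a by apply: HD; rewrite ger0_norm; lra.
have := Hn a; have := Hn (2 * a); have := Hn (2 / (1 + 2 * s)).
move: (f a) (f (2 * a)) (f (4 * a)) (f (2 / (1 + 2 * s))) m1 e1 e2 => fa f2 f4 fb m1 e1 e2 g1 g2 g3.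
have : fb <= T ^+ 2 * fa.
  apply: (le_trans m1); apply: (le_trans e1); rewrite expr2 -mulrA ler_pM2l //.
have : (1 + 2 * s) <= 2 * (1 + s) by lra.
nra.
Qed.

Lemma gc_real (R : realType) (f : R -> R) T L r s : convP f -> 0 < T -> 2 < L ->
  (forall t, `|t| <= 3 -> f (2 * t) <= T * f t) ->
  (forall t, `|t| <= 3 -> L * f t <= f (2 * t)) ->
  0 <= r -> r <= 1/4 -> 2 * L * r * (T + 2) <= L - 2 ->
  - r <= s -> s <= r ->
  ((L + 2) / 2) * ((1 + s) * f (1 / (1 + s))) <= (1 + 2 * s) * f (2 / (1 + 2 * s)).
Proof.
move=> hf T0 L2 HD HG r0 r1 hr s1 s2; have [Hc H0 Hn] := hf.
have c0 : 0 < 1 + s by lra.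
have d0 : 0 < 1 + 2 * s by lra.
set a := 1 / (1 + s).
set b := 2 / (1 + 2 * s).
have a0 : 4/5 <= a by rewrite /a ler_pdivlMr //; lra.
have a1 : a <= 4/3 by rewrite /a ler_pdivrMr // ; lra.
have b0 : 0 <= b by rewrite divr_ge0 // ltW.
have ea : a * (1 + s) = 1 by rewrite /a mulrC mulrA mulr1 mulfV // gt_eqF.
have eb : b * (1 + 2 * s) = 2 by rewrite /b mulrAC -mulrA mulfV ?mulr1 // gt_eqF.
have G1 : L * f a <= f (2 * a) by apply: HG; rewrite ger0_norm; lra.
have fa0 := Hn a; have f20 := Hn (2 * a); have fb0 := Hn b.
have K1 : 0 <= (L + 2) / 2 by lra.
have [sn|sp] := lerP s 0.
  have hb : 2 * a <= b.
    rewrite /b /a mulrA mulr1 ler_pdivrMr // mulrAC ler_pdivlMr //; lra.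
  have m1 := mono_pos hf (_ : 0 <= 2 * a) hb.
  have m1' : f (2 * a) <= f b by apply: m1; lra.
  have dc : (1 - 2 * r) * (1 + s) <= 1 + 2 * s by nra.
  have KL : (L + 2) / 2 <= L * (1 - 2 * r) by nra.
  move: (f a) (f (2 * a)) (f b) G1 m1' fa0 f20 fb0 => fa f2 fb G1 m1' fa0 f20 fb0.
  apply: (le_trans (y := (L * (1 - 2 * r)) * ((1 + s) * fa))).
    by apply: ler_wpM2r => //; apply: mulr_ge0 => //; lra.
  apply: (le_trans (y := ((1 - 2 * r) * (1 + s)) * f2)).
    have : 0 <= (1 - 2 * r) * (1 + s) by apply: mulr_ge0; lra.
    nra.
  apply: (le_trans (y := (1 + 2 * s) * f2)); first by apply: ler_wpM2r.
  by apply: ler_wpM2l => //; apply: ltW.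
have hb : b <= 2 * a.
  rewrite /b /a mulrA mulr1 ler_pdivrMr // mulrAC ler_pdivlMr //; lra.
have hb2 : 2 * a - 2 * a * r <= b.
  have -> : 2 * a - 2 * a * r = 2 * (1 - r) / (1 + s) by rewrite /a; field; lra.
  rewrite /b ler_pdivrMr // mulrAC ler_pdivlMr //; nra.
have C := Hc b (2 * a) (4 * a) hb (_ : 2 * a <= 4 * a).
have e1 : f (4 * a) <= T * f (2 * a).
  have -> : 4 * a = 2 * (2 * a) by ring.
  apply: HD; rewrite ger0_norm; lra.
have f40 := Hn (4 * a).
have C' : (4 * a - b) * f (2 * a) <= (4 * a - 2 * a) * f b + (2 * a - b) * f (4 * a).
  by apply: C; lra.
move: (f a) (f (2 * a)) (f b) (f (4 * a)) G1 fa0 f20 fb0 f40 C' e1 => fa f2 fb f4 G1 fa0 f20 fb0 f40 C' e1.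
have S1 : (2 * a - b) * f4 <= (2 * a * r) * (T * f2).
  apply: (le_trans (y := (2 * a - b) * (T * f2))).
    by apply: ler_wpM2l => //; lra.
  apply: ler_wpM2r; [apply: mulr_ge0 => //; exact: ltW | lra].
have S2 : 2 * a * f2 - 2 * a * r * (T * f2) <= 2 * a * fb.
  have : 2 * a * f2 <= (4 * a - b) * f2 by apply: ler_wpM2r => //; lra.
  lra.
have S3 : (1 - r * T) * f2 <= fb.
  have a0' : 0 < 2 * a by lra.
  rewrite -(ler_pM2l a0'); lra.
have rT : 0 <= 1 - r * T by nra.
have S4 : (1 - r * T) * (L * fa) <= fb.
  apply: le_trans S3; exact: ler_wpM2l.
have KL : (L + 2) / 2 <= L * (1 - r * T) by nra.
apply: (le_trans (y := (L * (1 - r * T)) * ((1 + s) * fa))).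
  by apply: ler_wpM2r => //; apply: mulr_ge0 => //; lra.
apply: (le_trans (y := (1 + s) * fb)).
  rewrite mulrCA; apply: ler_wpM2l; first lra.
  by rewrite [L * _]mulrC -mulrA.
apply: ler_wpM2r => //; lra.
Qed.

Lemma bal_real (R : realType) (f : R -> R) T K s : convP f -> 0 < T -> 0 < K ->
  (forall t, `|t| <= 3 -> f (2 * t) <= T * f t) ->
  (forall t, `|t| <= 3 -> f t <= K * f (- t)) ->
  - (1/4) <= s -> s <= 1/4 ->
  (1 + s) * f (1 / (1 + s)) <= (1 + 2 * K * (1 + T)) * ((1 - s) * f (- (1 / (1 - s)))).
Proof.
move=> hf T0 K0 HD HB s1 s2; have [Hc H0 Hn] := hf.
have c0 : 0 < 1 + s by lra.
have e0 : 0 < 1 - s by lra.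
set a := 1 / (1 + s).
set e := 1 / (1 - s).
have a0 : 0 <= a by rewrite /a divr_ge0 // ltW.
have a1 : a <= 4/3 by rewrite /a ler_pdivrMr // ; lra.
have ee0 : 0 <= e by rewrite /e divr_ge0 // ltW.
have e1 : e <= 4/3 by rewrite /e ler_pdivrMr // ; lra.
have B1 : f a <= K * f (- a) by apply: HB; rewrite ger0_norm; lra.
have fe0 := Hn (- e); have fa0 := Hn (- a).
have B2 : f (- a) <= (1 + T) * f (- e).
  have [sn|sp] := lerP s 0.
    have hae : a <= 2 * e.
      rewrite /a /e mulrA mulr1 ler_pdivrMr // mulrAC ler_pdivlMr //; lra.
    have m := mono_neg hf a0 hae.
    have D : f (2 * (- e)) <= T * f (- e) by apply: HD; rewrite normrN ger0_norm; lra.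
    rewrite mulrN in D; nra.
  have hae : a <= e.
    rewrite /a /e ler_pdivrMr // mulrAC ler_pdivlMr //; lra.
  have m := mono_neg hf a0 hae.
  nra.
have cc : 1 + s <= 2 * (1 - s) by lra.
have fa00 := Hn a.
move: (f a) (f (- a)) (f (- e)) B1 B2 fe0 fa0 fa00 => fa fma fme B1 B2 fe0 fa0 fa00.
have : fa <= K * ((1 + T) * fme).
  apply: (le_trans B1); apply: ler_wpM2l => //; exact: ltW.
nra.
Qed.

Lemma pick_rho (R : realType) (a b c d : R) : 0 < a -> 0 < b -> 0 < c -> 0 < d ->
  exists rho : R, [/\ 0 < rho, rho <= a, rho <= b, rho <= c & rho <= d].
Proof.
move=> a0 b0 c0 d0; exists (Order.min a (Order.min b (Order.min c d))).
rewrite !lt_min a0 b0 c0 d0; split => //.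
- by rewrite ge_min lexx.
- by rewrite !ge_min lexx orbT.
- by rewrite !ge_min lexx !orbT.
- by rewrite !ge_min lexx !orbT.
Qed.

Lemma nrmN (R : realType) (n : nat) (nrm : 'rV[R]_n -> R) (v : 'rV[R]_n) :
  is_norm nrm -> nrm (- v) = nrm v.
Proof. by move=> [_ _ nZ _]; rewrite -scaleN1r nZ normrN normr1 mul1r. Qed.

Lemma decomp (R : realType) (n : nat) (nrm : 'rV[R]_n -> R) (N : 'rV[R]_n -> 'rV[R]_n) x y rho :
  is_norm nrm -> is_gradient nrm N -> x != 0 -> 0 <= rho -> nrm y <= rho * nrm x ->
  exists s w, [/\ `|s| <= rho, dotp w (N x) = 0, nrm w <= 2 * rho * nrm x & y = s *: x + w].
Proof.
move=> hn hg xn0 r0 hy; have [n0 n1 nZ nD] := hn.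
have nx0 : 0 < nrm x.
  rewrite lt_neqAle n0 andbT eq_sym; apply/eqP => /n1 h; by rewrite h eqxx in xn0.
set s := dotp y (N x) / nrm x.
have d1 := dotN_le y hn hg xn0.
have d2 := dotN_le (- y) hn hg xn0.
rewrite dotpNl (nrmN _ hn) in d2.
have hs : `|s| <= rho.
  rewrite /s normrM normfV (gtr0_norm nx0) ler_pdivrMr //.
  rewrite ler_norml; lra.
exists s, (y - s *: x); split => //.
- rewrite dotpDl dotpNl dotpZl (dotN_eq hn hg xn0) /s mulfVK ?subrr //.
  by rewrite gt_eqF.
- apply: (le_trans (nD _ _)); rewrite (nrmN _ hn) nZ.
  have : `|s| * nrm x <= rho * nrm x by apply: ler_wpM2r => //; exact: ltW.
  lra.
- by rewrite addrC subrK.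
Qed.

Lemma phi_conv (R : realType) (n : nat) (nrm : 'rV[R]_n -> R) (N : 'rV[R]_n -> 'rV[R]_n) x w :
  is_norm nrm -> is_gradient nrm N -> x != 0 ->
  convP (fun t => hfun nrm N x (x + t *: w)).
Proof.
move=> hn hg xn0; split.
- by move=> p q u pq qu; apply: h_conv3.
- by rewrite scale0r addr0 h_xx.
- by move=> t; apply: h_ge0.
Qed.

Lemma ident1 (R : realType) (n : nat) (nrm : 'rV[R]_n -> R) (N : 'rV[R]_n -> 'rV[R]_n) x w s :
  is_norm nrm -> 0 < 1 + s ->
  hfun nrm N x (x + (s *: x + w)) = (1 + s) * hfun nrm N x (x + (1 / (1 + s)) *: w).
Proof.
move=> hn c0; rewrite -h_Z //; last exact: ltW.
have e : (1 + s) * (1 / (1 + s)) = 1 by rewrite mul1r mulfV // gt_eqF.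
congr hfun; rewrite scalerDr scalerA e scale1r.
by rewrite scalerDl scale1r addrA.
Qed.

Lemma ident2 (R : realType) (n : nat) (nrm : 'rV[R]_n -> R) (N : 'rV[R]_n -> 'rV[R]_n) x w s :
  is_norm nrm -> 0 < 1 + 2 * s ->
  hfun nrm N x (x + 2 *: (s *: x + w)) = (1 + 2 * s) * hfun nrm N x (x + (2 / (1 + 2 * s)) *: w).
Proof.
move=> hn c0; rewrite -h_Z //; last exact: ltW.
have e : (1 + 2 * s) * (2 / (1 + 2 * s)) = 2 by rewrite mulrC divfK // gt_eqF.
congr hfun; rewrite scalerDr scalerA [RHS]scalerDr scalerA e.
by rewrite scalerDl scale1r addrA.
Qed.

Lemma ident3 (R : realType) (n : nat) (nrm : 'rV[R]_n -> R) (N : 'rV[R]_n -> 'rV[R]_n) x w s :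
  is_norm nrm -> 0 < 1 - s ->
  hfun nrm N x (x - (s *: x + w)) = (1 - s) * hfun nrm N x (x + (- (1 / (1 - s))) *: w).
Proof.
move=> hn c0; rewrite -h_Z //; last exact: ltW.
have e : (1 - s) * (- (1 / (1 - s))) = -1 by rewrite mulrN mul1r mulfV // gt_eqF.
congr hfun; rewrite scalerDr scalerA e scaleN1r.
by rewrite scalerDl scale1r scaleNr opprD addrA.
Qed.

Lemma transfer (R : realType) (n : nat) (nrm : 'rV[R]_n -> R) (N : 'rV[R]_n -> 'rV[R]_n) x w rho rr
  (P : 'rV[R]_n -> Prop) :
  is_norm nrm -> 0 <= rho -> rho <= rr / 8 ->
  (forall y, nrm y <= rr * nrm x -> dotp y (N x) = 0 -> P y) ->
  nrm w <= 2 * rho * nrm x -> dotp w (N x) = 0 -> forall t, `|t| <= 3 -> P (t *: w).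
Proof.
move=> hn r0 r1 HP hw hw0 t ht; have [n0 n1 nZ nD] := hn.
apply: HP; last by rewrite dotpZl hw0 mulr0.
rewrite nZ; have := n0 x; have := n0 w; have := normr_ge0 t; nra.
Qed.

Unset Implicit Arguments.

Theorem theorem6p5 (R : realType) (n : nat)
  (nrm : 'rV[R]_n -> R) (N : 'rV[R]_n -> 'rV[R]_n) :
  is_norm nrm -> strictly_convex nrm -> C1_away_from_0 nrm N ->
  [/\ doubling_tangent nrm N -> doubling nrm N,
      doubling_tangent nrm N -> geom_convex_tangent nrm N -> geom_convex nrm N
    & doubling_tangent nrm N -> balanced_tangent nrm N -> balanced nrm N].
Proof.
move=> hn _ [hg _]; have [n0 n1 nZ nD] := hn.
split.
- case=> T [r [T0 r0 HT]].
  have [rho [rho0 rho1 rho2 _ _]] := pick_rho (a := 1/4) (b := r/8) (c := 1) (d := 1)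
    ltac:(lra) ltac:(lra) ltac:(lra) ltac:(lra).
  exists (2 * T ^+ 2), rho; split => //.
    by rewrite mulr_gt0 // exprn_gt0.
  move=> x y xn0 hy.
  have [s [w [hs hw0 hw yE]]] := decomp hn hg xn0 (ltW rho0) hy.
  have hf := phi_conv w hn hg xn0.
  have HD := transfer (P := fun v => hfun nrm N x (x + 2 *: v) <= T * hfun nrm N x (x + v))
     hn (ltW rho0) rho2 (HT x ^~ xn0) hw hw0.
  move: hs; rewrite ler_norml => /andP [s1 s2].
  rewrite yE ident2 ?ident1 //; try lra.
  apply: (dbl_real (f := fun t => hfun nrm N x (x + t *: w))) => //; try lra.
  by move=> t ht /=; rewrite -scalerA; apply: HD.
- case=> T [r [T0 r0 HT]] [L [r2 [L2 r20 HG]]].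
  have q0 : 0 < (L - 2) / (2 * L * (T + 2)).
    apply: divr_gt0; first lra.
    apply: mulr_gt0; [apply: mulr_gt0 | ]; lra.
  have [rho [rho0 rho1 rho2 rho3 rho4]] := pick_rho (a := 1/4) (b := r/8) (c := r2/8)
    (d := (L - 2) / (2 * L * (T + 2))) ltac:(lra) ltac:(lra) ltac:(lra) q0.
  exists rho, ((L + 2) / 2); split => //; first lra.
  move=> x y xn0 hy.
  have [s [w [hs hw0 hw yE]]] := decomp hn hg xn0 (ltW rho0) hy.
  have hf := phi_conv w hn hg xn0.
  have HD := transfer (P := fun v => hfun nrm N x (x + 2 *: v) <= T * hfun nrm N x (x + v))
     hn (ltW rho0) rho2 (HT x ^~ xn0) hw hw0.
  have HG' := transfer (P := fun v => L * hfun nrm N x (x + v) <= hfun nrm N x (x + 2 *: v))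
     hn (ltW rho0) rho3 (HG x ^~ xn0) hw hw0.
  move: hs; rewrite ler_norml => /andP [s1 s2].
  rewrite yE ident2 ?ident1 //; try lra.
  have hr : 2 * L * rho * (T + 2) <= L - 2.
    have p : 0 < 2 * L * (T + 2) by apply: mulr_gt0; [apply: mulr_gt0 | ]; lra.
    move: rho4; rewrite ler_pdivlMr // => h'.
    apply: le_trans h'; rewrite !mulrA; lra.
  apply: (gc_real (f := fun t => hfun nrm N x (x + t *: w)) (T := T) (r := rho)) => //; try lra.
  + by move=> t ht /=; rewrite -scalerA; apply: HD.
  + by move=> t ht /=; rewrite -scalerA; apply: HG'.
- case=> T [r [T0 r0 HT]] [r2 [K [r20 K0 HB]]].
  have [rho [rho0 rho1 rho2 rho3 _]] := pick_rho (a := 1/4) (b := r/8) (c := r2/8) (d := 1)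
    ltac:(lra) ltac:(lra) ltac:(lra) ltac:(lra).
  exists rho, (1 + 2 * K * (1 + T)); split => //.
    have : 0 <= 2 * K * (1 + T) by apply: mulr_ge0; [apply: mulr_ge0|]; lra.
    lra.
  move=> x y xn0 hy.
  have [s [w [hs hw0 hw yE]]] := decomp hn hg xn0 (ltW rho0) hy.
  have hf := phi_conv w hn hg xn0.
  have HD := transfer (P := fun v => hfun nrm N x (x + 2 *: v) <= T * hfun nrm N x (x + v))
     hn (ltW rho0) rho2 (HT x ^~ xn0) hw hw0.
  have HB' := transfer (P := fun v => hfun nrm N x (x + v) <= K * hfun nrm N x (x - v))
     hn (ltW rho0) rho3 (HB x ^~ xn0) hw hw0.
  move: hs; rewrite ler_norml => /andP [s1 s2].
  rewrite yE ident3 ?ident1 //; try lra.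
  apply: (bal_real (f := fun t => hfun nrm N x (x + t *: w))) => //; try lra.
  + by move=> t ht /=; rewrite -scalerA; apply: HD.
  + by move=> t ht /=; rewrite scaleNr; apply: HB'.
Qed.
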